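(* Let $X\times G\to X$ be a Bourbaki-proper continuous right action of a locally compact Hausdorff group on a Hausdorff space, with quotient map $\pi\colon X\to X/G$, and let $F\subseteq X$ be a closed subset such that the action is $F$-proper. If $F$ is paracompact, then so is $\pi(F)$.
   Context: For $A,B\subseteq X$ set $\langle A:B\rangle:=\{g\in G: Bg\cap A\neq\emptyset\}$ and write $A\perp B$ if it is relatively compact in $G$. The action is Bourbaki-proper if for all $x,x'\in X$ there are neighborhoods $V_x\ni x$, $V_{x'}\ni x'$ with $V_{x'}\perp V_x$. For closed $F$, it is $F$-proper if for every $x\in X$ there are neighborhoods $V_x\ni x$ and $V_F\supseteq F$ with $V_F\perp V_x$. *)

(* Defs.v *)
From HB Require Import structures.
From mathcomp Require Import all_boot all_order.
From mathcomp Require Import all_classical.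
From mathcomp Require Import topology.
Set Implicit Arguments. Unset Strict Implicit. Unset Printing Implicit Defensive.
Local Open Scope classical_set_scope.

Definition transporter (X G : Type) (act : X -> G -> X) (A B : set X) : set G :=
  [set g | exists2 b, B b & A (act b g)].

Definition perp (X : Type) (G : topologicalType) (act : X -> G -> X)
    (A B : set X) : Prop :=
  compact (closure (transporter act A B)).

Definition bourbaki_proper (X G : topologicalType) (act : X -> G -> X) : Prop :=
  forall x x' : X, exists Vx, exists Vx',
    [/\ nbhs x Vx, nbhs x' Vx' & perp act Vx' Vx].

Definition set_nbhs (T : topologicalType) (F N : set T) : Prop :=
  exists2 O, open O & F `<=` O /\ O `<=` N.

Definition F_proper (X G : topologicalType) (act : X -> G -> X) (F : set X) : Prop :=
  forall x : X, exists Vx, exists VF,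
    [/\ nbhs x Vx, set_nbhs F VF & perp act VF Vx].

(** Relatively open
    subsets of A are traces on A of open subsets of T. *)
Definition paracompact_set (T : topologicalType) (A : set T) : Prop :=
  (forall a b, A a -> A b -> a <> b ->
     exists U, exists V, [/\ open U, open V, U a, V b & U `&` V `&` A = set0])
  /\
  (forall C : set (set T), (forall U, C U -> open U) ->
     A `<=` \bigcup_(U in C) U ->
     exists D : set (set T),
       [/\ (forall V, D V -> open V),
           (forall V, D V -> exists2 U, C U & V `&` A `<=` U `&` A),
           A `<=` \bigcup_(V in D) V &
           (forall a, A a -> exists2 N, nbhs a N &
              finite_set [set V | D V /\ (N `&` V `&` A !=set0)])]).

(* Main.v *)
Require Import Defs.
From HB Require Import structures.
From mathcomp Require Import all_boot all_order.
From mathcomp Require Import all_classical.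
From mathcomp Require Import topology.
Local Open Scope classical_set_scope.

Lemma fin_near {I T : Type} {S : set I} {G : set_system T} {P : I -> set T} :
  Filter G -> finite_set S -> (forall i, S i -> G (P i)) ->
  G [set x | forall i, S i -> P i x].
Proof.
elim/Pchoice: I S P => I S P FG /finite_fsetP [D ->] H.
have HB := @filter_bigI T I D P G FG (fun i iD => H i iD).
apply: filterS HB => x Hx i Si; exact: Hx i Si.
Qed.

Lemma onbhs {X : topologicalType} {U : set X} {x : X} : open U -> U x -> nbhs x U.
Proof. by move=> oU Ux; apply: open_nbhs_nbhs; split. Qed.

Lemma sepK {X : topologicalType} (F S K : set X) : compact K ->
  (forall k, K k -> exists U, exists O,
     [/\ open U, U k, open O, S `<=` O & U `&` O `&` F = set0]) ->
  exists U, exists O, [/\ open U, K `<=` U, open O, S `<=` O & U `&` O `&` F = set0].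
Proof.
move=> /compact_near_coveringP cK H.
pose filt := filter_from [set O : set X | open O /\ S `<=` O]
   (fun O => [set i : set X | i `<=` O]).
have Ff : Filter filt.
  apply: filter_from_filter; first by exists setT; split => //; exact: openT.
  move=> A B [oA sA] [oB sB]; exists (A `&` B).
    by split; [exact: openI | move=> x Sx; split; [exact: sA|exact: sB]].
  by move=> i /= ii; split => x /ii [].
have := cK _ filt (fun i x => exists U, [/\ open U, U x & U `&` i `&` F = set0]) Ff.
case.
  move=> k Kk; have [U [O [oU Uk oO SO UOF]]] := H k Kk.
  exists (U, [set i : set X | i `<=` O]) => /=.
    split; first exact: onbhs.
    by exists O.
  move=> [x' i] [/= Ux' iO]; exists U; split => //.
  apply/seteqP; split => // z [[Uz iz] Fz]; rewrite -UOF; split => //; split => //.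
  exact: iO.
move=> O [oO SO] HO.
exists [set x | exists U, [/\ open U, U x & U `&` O `&` F = set0]], O; split => //.
- rewrite openE => x [U [oU Ux UOF]].
  by have := oU x Ux; apply: filterS => y Uy; exists U.
- by move=> k Kk; apply: (HO O).
- apply/seteqP; split => // z [[[U [oU Uz UOF]] Oz] Fz]; rewrite -UOF.
  by split => //; split.
Qed.

Lemma locfin_compact {X : topologicalType} (F K : set X) (D : set (set X)) :
  compact K ->
  (forall k, K k -> exists2 N, nbhs k N &
       finite_set [set V | D V /\ N `&` V `&` F !=set0]) ->
  exists O, [/\ open O, K `<=` O &
       finite_set [set V | D V /\ O `&` V `&` F !=set0]].
Proof.
move=> /compact_near_coveringP cK H.
pose filt := filter_from [set S0 : set (set X) | finite_set S0]
   (fun S0 => [set i : set (set X) | S0 `<=` i]).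
have Ff : Filter filt.
  apply: filter_from_filter; first by exists set0; exact: finite_set0.
  move=> A B fA fB; exists (A `|` B); first by rewrite /= finite_setU.
  by move=> i /= Ai; split => x ?; apply: Ai; [left|right].
have := cK _ filt (fun i x => exists2 N, nbhs x N &
   [set V | D V /\ N `&` V `&` F !=set0] `<=` i) Ff.
case.
  move=> k Kk; have [N kN fN] := H k Kk.
  exists ([set y | nbhs y N], [set i | [set V | D V /\ N `&` V `&` F !=set0] `<=` i]) => /=.
    split; first exact: nbhs_interior.
    by exists [set V | D V /\ N `&` V `&` F !=set0].
  by move=> [x' i] [/= Nx' iN]; exists N.
move=> S0 fS0 HS.
exists [set x | exists2 N, nbhs x N & [set V | D V /\ N `&` V `&` F !=set0] `<=` S0].
split.
- rewrite openE => x [N xN sN].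
  by have := nbhs_interior xN; apply: filterS => y yN; exists N.
- by move=> k Kk; apply: (HS S0).
- apply: sub_finite_set fS0 => V [DV [z [[[N zN sN] Vz] Fz]]].
  apply: sN; split => //; exists z; split => //; split => //.
  exact: nbhs_singleton.
Qed.

Theorem lemma2p13
  (* a locally compact Hausdorff topological group G *)
  (G : topologicalType) (mul : G -> G -> G) (inv : G -> G) (e : G)
  (mulA : forall a b c, mul a (mul b c) = mul (mul a b) c)
  (mul1g : forall a, mul e a = a) (mulg1 : forall a, mul a e = a)
  (mulVg : forall a, mul (inv a) a = e) (mulgV : forall a, mul a (inv a) = e)
  (mul_cont : continuous (fun p : G * G => mul p.1 p.2))
  (inv_cont : continuous inv)
  (G_haus : hausdorff_space G) (G_lc : locally_compact [set: G])
  (* a Hausdorff space X with a continuous right action *)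
  (X : topologicalType) (X_haus : hausdorff_space X)
  (act : X -> G -> X)
  (act_cont : continuous (fun p : X * G => act p.1 p.2))
  (act1 : forall x, act x e = x)
  (actM : forall x g h, act (act x g) h = act x (mul g h))
  (* Bourbaki-properness *)
  (bprop : bourbaki_proper act)
  (* the orbit space X/G with its quotient topology and quotient map pi *)
  (Q : topologicalType) (pi : X -> Q)
  (pi_surj : forall q : Q, exists x, pi x = q)
  (pi_fibers : forall x y, pi x = pi y <-> exists g, act x g = y)
  (Q_open : forall W : set Q, open W <-> open (pi @^-1` W))
  (* the closed set F *)
  (F : set X) (F_closed : closed F) (Fprop : F_proper act F)
  (F_para : paracompact_set F) :
  paracompact_set (pi @` F).
Proof.
have [F_haus F_cov] := F_para.
have act_g : forall x, continuous (act x).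
  move=> x g W Wn.
  have := act_cont (x, g) _ Wn; case=> [[A B]] /= [nA nB] sAB.
  apply: filterS nB => g' Bg'; exact: (sAB (x, g') (conj (nbhs_singleton nA) Bg')).
have L1 : forall C, closed C -> C `<=` F -> closed (pi @` C).
  move=> C cC CF; rewrite -[pi @` C]setCK closedC Q_open openE => x /= nx.
  have [Vx [VF [nVx sVF pK]]] := Fprop x; case: sVF => O oO [FO OVF].
  have /compact_near_coveringP cK := pK.
  have HM : nbhs x [set y | closure (transporter act VF Vx) `<=` (fun g => ~ C (act y g))].
    apply: (cK X (nbhs x) (fun y g => ~ C (act y g)) (nbhs_filter x)) => g Kg.
    have nCx : ~ C (act x g).
      move=> Cxg; apply: nx; exists (act x g) => //.
      by symmetry; apply/pi_fibers; exists g.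
    have oC : open (~` C) by rewrite openC.
    have := act_cont (x, g) _ (onbhs oC nCx); case=> [[A B]] /= [nA nB] sAB.
    exists (B, A) => //.
    by move=> [g' y] [/= Bg' Ay]; exact: (sAB (y, g') (conj Ay Bg')).
  apply: (filterS _ (filterI HM nVx)) => y [Ky Vy] [c Cc pc].
  have [h yh] := (pi_fibers y c).1 (esym pc).
  have Kh : closure (transporter act VF Vx) h.
    apply: subset_closure; exists y => //; rewrite yh; apply: OVF; apply: FO; exact: CF.
  by apply: (Ky h Kh); rewrite yh.
have fib : forall f, compact [set z | F z /\ pi z = pi f].
  move=> f; have [Vx [VF [nVx sVF pK]]] := Fprop f; case: sVF => O oO [FO OVF].
  have -> : [set z | F z /\ pi z = pi f] = act f @` [set g | F (act f g)].
    apply/seteqP; split.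
      move=> z [Fz pz]; have [g fg] := (pi_fibers f z).1 (esym pz).
      by exists g; rewrite /= fg.
    move=> z [g Fg <-]; split => //.
    by symmetry; apply/pi_fibers; exists g.
  apply: continuous_compact; first by apply: continuous_subspaceT; exact: act_g.
  apply: (subclosed_compact _ pK).
    apply: (@preimage_closed _ _ (act f)) => //; move=> g _; exact: act_g.
  move=> g Fg; apply: subset_closure; exists f; first exact: nbhs_singleton nVx.
  by apply: OVF; apply: FO.
have Topen : forall O, open O -> open (~` (pi @` (F `\` O))).
  move=> O oO; rewrite openC; apply: L1; last by move=> z [].
  by apply: closedI => //; rewrite closedC.
have clF : forall V, closure (V `&` F) `<=` F.
  move=> V z cz; rewrite ((closure_id F).1 F_closed).
  by apply: closureS cz => y [].
split.
  move=> a b [f Ff <-] [f' Ff' <-] neq.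
  have step1 : forall k2, F k2 -> pi k2 = pi f' -> exists U O,
      [/\ open U, [set z | F z /\ pi z = pi f] `<=` U, open O, [set k2] `<=` O
        & U `&` O `&` F = set0].
    move=> k2 Fk2 pk2; apply: sepK (fib f) _ => k1 [Fk1 pk1].
    have nk : k1 <> k2 by move=> ee; apply: neq; rewrite -pk1 -pk2 ee.
    have [U [V [oU oV Uk1 Vk2 UV]]] := F_haus k1 k2 Fk1 Fk2 nk.
    by exists U, V; split => // z ->.
  have [U2 [O1 [oU2 KU2 oO1 KO1 UO]]] : exists U O,
      [/\ open U, [set z | F z /\ pi z = pi f'] `<=` U, open O,
        [set z | F z /\ pi z = pi f] `<=` O & U `&` O `&` F = set0].
    apply: sepK (fib f') _ => k2 [Fk2 pk2].
    have [U [O [oU KU oO k2O UOF]]] := step1 k2 Fk2 pk2.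
    exists O, U; split => //; first exact: k2O.
    by rewrite (setIC O U).
  exists (~` (pi @` (F `\` O1))), (~` (pi @` (F `\` U2))); split.
  - exact: Topen.
  - exact: Topen.
  - by move=> [z [Fz nz] pz]; apply: nz; apply: KO1.
  - by move=> [z [Fz nz] pz]; apply: nz; apply: KU2.
  - apply/seteqP; split => // q [[nq1 nq2] [z Fz pzq]].
    rewrite -pzq in nq1 nq2.
    have z1 : O1 z by apply: contrapT => nz; apply: nq1; exists z.
    have z2 : U2 z by apply: contrapT => nz; apply: nq2; exists z.
    have : (U2 `&` O1 `&` F) z by split; [split|].
    by rewrite UO.
have R : forall x, F x -> forall U, open U -> U x ->
    exists V, [/\ open V, V x & closure (V `&` F) `<=` U].
  move=> x Fx U oU Ux.
  pose C0 := [set B : set X | open B /\ (B = U \/ exists A,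
     [/\ open A, A x & A `&` B `&` F = set0])].
  have [||D [oD refD covD lfD]] := F_cov C0.
  - by move=> B [].
  - move=> z Fz; case: (pselect (U z)) => Uz.
      by exists U => //; split => //; left.
    have nz : x <> z by move=> ee; apply: Uz; rewrite -ee.
    have [A [B [oA oB Ax Bz AB]]] := F_haus x z Fx Fz nz.
    by exists B => //; split => //; right; exists A.
  have [N nN finN] := lfD x Fx.
  pose Pf := fun V => [set y | V `&` F `<=` U \/ exists A,
        [/\ open A, A y & A `&` V `&` F = set0]].
  have PV : forall V, [set V | D V /\ N `&` V `&` F !=set0] V -> nbhs x (Pf V).
    move=> V [DV _]; rewrite /Pf; have [B [oB Bc] VB] := refD V DV.
    case: Bc => [BU|[A [oA Ax AB]]].
      apply: (filterS _ (@filterT _ _ (nbhs_filter x))) => y _; left.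
      by move=> z /VB []; rewrite BU.
    apply: (filterS _ (onbhs oA Ax)) => y Ay; right; exists A; split => //.
    apply/seteqP; split => // z [[Az Vz] Fz].
    have [Bz _] := VB z (conj Vz Fz).
    have : (A `&` B `&` F) z by split; [split|].
    by rewrite AB.
  have W := fin_near (nbhs_filter x) finN PV.
  have nM := filterI nN W.
  exists (interior (N `&` [set y | forall i, [set V | D V /\ N `&` V `&` F !=set0] i -> Pf i y])).
  split; [exact: open_interior | exact: nM |].
  move=> z cz; have Fz : F z by apply: (clF _ z cz).
  apply: contrapT => nUz.
  have [V DV Vz] := covD z Fz.
  have [y [[My Fy] Vy]] := cz V (onbhs (oD V DV) Vz).
  have [Ny Wy] := interior_subset My.
  have FinV : D V /\ N `&` V `&` F !=set0 by split => //; exists y.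
  case: (Wy V FinV) => [VFU|[A [oA Ay AVF]]].
    by apply: nUz; exact: VFU z (conj Vz Fz).
  have : (A `&` V `&` F) y by split; [split|].
  by rewrite AVF.
have M : forall Cq : set (set Q), (forall W, Cq W -> open W) ->
    pi @` F `<=` \bigcup_(W in Cq) W ->
  exists S : set (set Q), [/\ forall E, S E -> closed E /\ E `<=` pi @` F,
     forall E, S E -> exists2 W, Cq W & E `<=` W,
     pi @` F `<=` \bigcup_(E in S) E &
     forall a, (pi @` F) a -> exists2 N, nbhs a N &
        finite_set [set E | S E /\ N `&` E !=set0]].
  move=> Cq oCq covCq.
  pose C' := [set V : set X | open V /\
     exists2 W, Cq W & closure (V `&` F) `<=` pi @^-1` W].
  have [||D [oD refD covD lfD]] := F_cov C'.
  - by move=> V [].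
  - move=> x Fx.
    have [W CW Wx] := covCq (pi x) (ex_intro2 _ _ x Fx erefl).
    have oU : open (pi @^-1` W) by rewrite -Q_open; apply: oCq.
    have [V [oV Vx cV]] := R x Fx _ oU Wx.
    by exists V => //; split => //; exists W.
  exists [set E | exists2 V, D V & E = pi @` closure (V `&` F)]; split.
  - move=> E [V DV ->]; split.
      by apply: L1; [exact: closed_closure | exact: clF].
    by move=> q [z /clF Fz <-]; exists z.
  - move=> E [V DV ->]; have [U [oU [W CW cU]] VU] := refD V DV.
    exists W => // q [z cz <-]; apply: cU.
    exact: (closureS VU) cz.
  - move=> q [x Fx <-]; have [V DV Vx] := covD x Fx.
    exists (pi @` closure (V `&` F)); first by exists V.
    by exists x => //; apply: subset_closure.
  - move=> a [f Ff <-].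
    have [O [oO KO finO]] := (@locfin_compact X F _ D (fib f))
      (fun k kK => lfD k (proj1 kK)).
    exists (~` (pi @` (F `\` O))).
      apply: onbhs; first exact: Topen.
      by move=> [z [Fz nz] pz]; apply: nz; apply: KO.
    apply: sub_finite_set (finite_image (fun V => pi @` closure (V `&` F)) finO).
    move=> E [[V DV ->] [q [nq [z cz zq]]]].
    exists V => //; split => //.
    have Oz : O z.
      apply: contrapT => nz; apply: nq; exists z => //; split => //.
      exact: clF cz.
    have [w [[Vw Fw] Ow]] := cz O (onbhs oO Oz).
    by exists w; split; [split|].
move=> Cq oCq covCq.
have [S1 [cS1 rS1 covS1 lfS1]] := M Cq oCq covCq.
pose Cn := [set W : set Q | open W /\ finite_set [set E | S1 E /\ W `&` E !=set0]].
have [||S2 [cS2 rS2 covS2 lfS2]] := M Cn.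
- by move=> W [].
- move=> a Ya; have [N nN fN] := lfS1 a Ya.
  exists (interior N); last exact: nN.
  split; first exact: open_interior.
  apply: sub_finite_set fN => E [SE [z [Nz Ez]]]; split => //.
  by exists z; split => //; exact: interior_subset.
have finB : forall B, S2 B -> finite_set [set E | S1 E /\ B `&` E !=set0].
  move=> B SB; have [W [oW fW] BW] := rS2 B SB.
  apply: sub_finite_set fW => E [SE [z [Bz Ez]]]; split => //.
  by exists z; split => //; exact: BW.
have Yc : closed (pi @` F) := L1 F F_closed (@subset_refl _ F).
have [wf Hwf] : {wf : set Q -> set Q & forall E, S1 E -> Cq (wf E) /\ E `<=` wf E}.
  apply: (@choice _ _ (fun E W => S1 E -> Cq W /\ E `<=` W)) => E.
  case: (pselect (S1 E)) => SE; last by exists set0.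
  by have [W CW EW] := rS1 E SE; exists W.
pose A' E := ~` \bigcup_(B in [set B | S2 B /\ B `&` E = set0]) B.
have oA' : forall E, open (A' E).
  move=> E; rewrite /A' openE => q nq.
  case: (pselect ((pi @` F) q)) => Yq.
    have [N nN fN] := lfS2 q Yq.
    pose Pf := fun B => [set y | B `&` E = set0 -> ~ B y].
    have PB : forall B, [set B | S2 B /\ N `&` B !=set0] B -> nbhs q (Pf B).
      move=> B [SB _]; rewrite /Pf.
      case: (pselect (B `&` E = set0)) => BE.
        have oB : open (~` B) by rewrite openC; case: (cS2 B SB).
        apply: (filterS _ (onbhs oB _)); first by move=> y nBy _.
        by move=> Bq; apply: nq; exists B.
      by apply: (filterS _ (@filterT _ _ (nbhs_filter q))) => y _ /BE.
    have W := fin_near (nbhs_filter q) fN PB.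
    apply: (filterS _ (filterI nN W)) => y [Ny Wy] [B [SB BE] By].
    exact: (Wy B (conj SB (ex_intro _ y (conj Ny By)))) BE By.
  have oY : open (~` (pi @` F)) by rewrite openC.
  apply: (filterS _ (onbhs oY Yq)) => y nY [B [SB _] By]; apply: nY.
  exact: (cS2 B SB).2 y By.
exists [set V | exists2 E, S1 E & V = A' E `&` wf E]; split.
- move=> V [E SE ->]; apply: openI; [exact: oA' | exact: oCq (Hwf E SE).1].
- move=> V [E SE ->]; exists (wf E); first exact: (Hwf E SE).1.
  by move=> z [[_ w] Yz].
- move=> a Ya; have [E SE Ea] := covS1 a Ya.
  exists (A' E `&` wf E); first by exists E.
  split; last exact: (Hwf E SE).2 a Ea.
  move=> [B [SB BE] Ba].
  have : (B `&` E) a by [].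
  by rewrite BE.
- move=> a Ya; have [N nN fN] := lfS2 a Ya; exists N => //.
  apply: sub_finite_set (finite_image (fun E => A' E `&` wf E)
    (bigcup_finite fN (fun B hB => finB B (proj1 hB)))).
  move=> V [[E SE ->] [z [[Nz [A'z wz]] Yz]]].
  have [B SB Bz] := covS2 z Yz.
  exists E => //; exists B; first by split => //; exists z.
  split => //; apply: contrapT => nBE; apply: A'z; exists B => //; split => //.
  by apply/seteqP; split => // w Bw; apply: nBE; exists w.
Qed.
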